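(* Let $P\subset \mathbb{R}^d$ be a set of $n$ points and let $G$ be the greedy $3/2$-spanner of $P$. Then $G$ has tree-width at most $15\, \eta_d\, c_d\, 8^d \cdot n^{1-1/d}$.
   Context: The greedy $t$-spanner of $P$ is obtained by considering all pairs $\{u,v\}$ of points in order of nondecreasing Euclidean distance and inserting the edge $\{u,v\}$ (weighted by $|uv|$) whenever the current graph contains no path between $u$ and $v$ of length at most $t\cdot|uv|$. $\eta_d$ is the packing constant of $\mathbb{R}^d$: the smallest number such that for every $r\in(0,1]$, every set of points in the $d$-dimensional unit ball with pairwise distances at least $r$ has at most $\eta_d r^{-d}$ points. $c_d\leq 2^{\mathcal{O}(d)}$ is the constant (due to Le and Than) such that for every point set in $\mathbb{R}^d$ and every $t\in(1,3/2]$, every subgraph on $k$ vertices of the greedy $t$-spanner has a $(1-\frac{1}{\eta_d 2^{d+1}})$-balanced separator of size $c_d(t-1)^{1-2d}k^{1-1/d}$; here an $\alpha$-balanced separator of a graph $H$ is a vertex set $S$ such that $V(H)\setminus S$ splits into two parts with no edges between them, each of size at most $\alpha|V(H)|$. *)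

(* Defs.v *)
From HB Require Import structures.
From mathcomp Require Import all_boot all_order all_algebra.
From mathcomp Require Import boolp reals exp.
Set Implicit Arguments. Unset Strict Implicit. Unset Printing Implicit Defensive.
Import Order.TTheory GRing.Theory Num.Theory.
Local Open Scope ring_scope.

Section Defs.
Variable R : realType.

Definition edist (d : nat) (x y : 'rV[R]_d) : R :=
  Num.sqrt (\sum_(i < d) (x ord0 i - y ord0 i) ^+ 2).

Definition packing_bound (d : nat) (eta : R) : Prop :=
  forall (r : R), 0 < r -> r <= 1 ->
  forall (k : nat) (q : 'I_k -> 'rV[R]_d),
    (forall i, edist (q i) 0 <= 1) ->
    (forall i j, i != j -> r <= edist (q i) (q j)) ->
    k%:R <= eta * r ^- d.

Definition is_packing_constant (d : nat) (eta : R) : Prop :=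
  packing_bound d eta /\ (forall eta', packing_bound d eta' -> eta <= eta').

Section Greedy.
Variables (d n : nat) (p : 'I_n -> 'rV[R]_d).

Definition adj (E : seq ('I_n * 'I_n)) : rel 'I_n :=
  fun x y => ((x, y) \in E) || ((y, x) \in E).

Definition walk_length (u : 'I_n) (w : seq 'I_n) : R :=
  \sum_(l <- pairmap (fun a b => edist (p a) (p b)) u w) l.

Definition has_path_within (E : seq ('I_n * 'I_n)) (u v : 'I_n) (L : R) : Prop :=
  exists w : seq 'I_n, [/\ path (adj E) u w, last u w = v & walk_length u w <= L].

Definition all_pairs : seq ('I_n * 'I_n) :=
  [seq uv : 'I_n * 'I_n <- [seq (i, j) | i <- enum 'I_n, j <- enum 'I_n] | (nat_of_ord uv.1 < nat_of_ord uv.2)%N].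

Definition greedy_order (s : seq ('I_n * 'I_n)) : Prop :=
  perm_eq s all_pairs /\
  sorted (fun a b : 'I_n * 'I_n =>
            edist (p a.1) (p a.2) <= edist (p b.1) (p b.2)) s.

Definition greedy_spanner (t : R) (s : seq ('I_n * 'I_n)) : seq ('I_n * 'I_n) :=
  foldl (fun E uv =>
           if `[< has_path_within E uv.1 uv.2 (t * edist (p uv.1) (p uv.2)) >]
           then E else rcons E uv) [::] s.
End Greedy.

Definition balanced_separator (m : nat) (V : {set 'I_m}) (F : rel 'I_m)
    (alpha : R) (S : {set 'I_m}) : Prop :=
  S \subset V /\
  exists A B : {set 'I_m},
    [/\ A :|: B = V :\: S, [disjoint A & B],
        (forall x y, x \in A -> y \in B -> ~~ F x y),
        #|A|%:R <= alpha * #|V|%:R & #|B|%:R <= alpha * #|V|%:R].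

Definition le_than_constant (d : nat) (eta c : R) : Prop :=
  forall (m : nat) (q : 'I_m -> 'rV[R]_d), injective q ->
  forall (t : R), 1 < t -> t <= 3 / 2 ->
  forall s : seq ('I_m * 'I_m), greedy_order q s ->
  forall (V : {set 'I_m}) (F : rel 'I_m),
    (forall x y, F x y -> [/\ adj (greedy_spanner q t s) x y, x \in V & y \in V]) ->
    exists S : {set 'I_m},
      balanced_separator V F (1 - (eta * 2 ^+ d.+1)^-1) S /\
      #|S|%:R <= c * powR (t - 1) (1 - 2 * d%:R) * powR #|V|%:R (1 - d%:R^-1).

Definition is_tree (k : nat) (e : rel 'I_k) : Prop :=
  [/\ symmetric e, irreflexive e,
      (forall x y, connect e x y) &
      (forall c : seq 'I_k, uniq c -> (2 < size c)%N -> ~~ cycle e c)].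

Definition tree_decomposition (n : nat) (G : rel 'I_n)
    (k : nat) (e : rel 'I_k) (B : 'I_k -> {set 'I_n}) : Prop :=
  [/\ is_tree e,
      (forall x, exists i, x \in B i),
      (forall x y, G x y -> exists i, (x \in B i) && (y \in B i)) &
      (forall x i j, x \in B i -> x \in B j ->
         connect (fun a b => [&& e a b, x \in B a & x \in B b]) i j)].

Definition treewidth_le (n : nat) (G : rel 'I_n) (w : R) : Prop :=
  exists (k : nat) (e : rel 'I_k) (B : 'I_k -> {set 'I_n}),
    tree_decomposition G e B /\ (forall i, #|B i|%:R - 1 <= w).

End Defs.

(* Main.v *)
Require Import Defs.
From HB Require Import structures.
From mathcomp Require Import all_boot all_order all_algebra.
From mathcomp Require Import boolp reals exp.
From mathcomp Require Import zify ring lra.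
Import Order.TTheory GRing.Theory Num.Theory.
Local Open Scope ring_scope.

Set Implicit Arguments. Unset Strict Implicit. Unset Printing Implicit Defensive.



Section Tree.
Variable R : realType.
Variable n : nat.

Definition Decomp (G : rel 'I_n) (V : {set 'I_n}) (w : R) : Prop :=
  exists (k : nat) (par : nat -> nat) (bag : nat -> {set 'I_n}),
   [/\ (0 < k)%N,
       (forall i, (0 < i < k)%N -> (par i < i)%N),
       (forall i, (i < k)%N -> bag i \subset V),
       (forall x, x \in V -> exists2 i, (i < k)%N & x \in bag i) &
       [/\ (forall x y, x \in V -> y \in V -> G x y ->
           exists2 i, (i < k)%N & (x \in bag i) && (y \in bag i)),
       (forall x, exists2 top, (top < k)%N & forall i, (i < k)%N -> x \in bag i ->
            i = top \/ ((0 < i)%N /\ x \in bag (par i))) &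
       (forall i, (i < k)%N -> #|bag i|%:R <= w) ] ].

Lemma seq_max_ex (k : nat) (f : 'I_k -> nat) (c : seq 'I_k) : c != [::] ->
  exists2 m, m \in c & forall y, y \in c -> (f y <= f m)%N.
Proof.
elim: c => // a c IH _.
case: (altP (c =P [::])) => [->|cne].
  by exists a; rewrite ?inE // => y; rewrite inE => /eqP->.
have [m mc mmax] := IH cne.
case: (leqP (f a) (f m)) => h.
  exists m; first by rewrite inE mc orbT.
  by move=> y; rewrite inE => /orP[/eqP->//|/mmax].
exists a; first by rewrite inE eqxx.
move=> y; rewrite inE => /orP[/eqP->//|/mmax]; lia.
Qed.

Lemma par_tree (k : nat) (par : nat -> nat) (k0 : (0 < k)%N)
  (hpar : forall i, (0 < i < k)%N -> (par i < i)%N) :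
  is_tree (fun a b : 'I_k => (a != b) &&
      (((0 < a)%N && (par a == b)) || ((0 < b)%N && (par b == a)))).
Proof.
set e := (fun a b : 'I_k => _).
have esym : symmetric e.
  by move=> a b; rewrite /e eq_sym orbC.
split=> //.
- by move=> a; rewrite /e eqxx.
- have toroot : forall x : 'I_k, connect e x (Ordinal k0).
    move=> x; have [m] := ubnP (val x); elim: m x => // m IH x.
    rewrite ltnS => xm.
    case: (posnP (val x)) => x0.
      by have -> : x = Ordinal k0 by apply: val_inj.
    have hx : (par x < x)%N by apply: hpar; rewrite x0 ltn_ord.
    have plt : (par x < k)%N by apply: ltn_trans hx (ltn_ord x).
    apply: (connect_trans (y := Ordinal plt)).
      apply: connect1; rewrite /e /= x0 eqxx /= andbT.
      apply/eqP => /(congr1 val) /= h.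
      by move: hx; rewrite -h ltnn.
    by apply: IH => /=; apply: leq_trans hx xm.
  move=> x y; apply: (connect_trans (toroot x)).
  by rewrite (sym_connect_sym esym) toroot.
- move=> c uc sc; apply/negP => ce.
  have cne : c != [::] by move: sc; case: (c) => // *.
  have [m mc mmax] := seq_max_ex (fun i : 'I_k => val i) cne.
  case: (rot_to mc) => i s' hrot.
  have := ce; rewrite -(rot_cycle i) hrot => ce'.
  have := uc; rewrite -(rot_uniq i) hrot => uc'.
  have ssz : size s' = (size c).-1 by rewrite -(size_rot i c) hrot.
  case: s' hrot ce' uc' ssz => [|y s2] hrot ce' uc' ssz; first by move: ssz sc => /= ->; lia.
  case: s2 hrot ce' uc' ssz => [|a s3] hrot ce' uc' ssz; first by move: ssz sc => /= ->; lia.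
  move: ce'; rewrite /cycle rcons_path => /andP[/= /andP[emy _] ezm].
  set z := last a s3 in ezm.
  have zin : z \in a :: s3 by apply: mem_last.
  have ymem : y \in c by rewrite -(mem_rot i) hrot !inE eqxx orbT.
  have zmem : z \in c by rewrite -(mem_rot i) hrot in_cons in_cons zin !orbT.
  move: uc' => /= /andP[mnot /andP[ynot _]].
  have mny : m != y by apply: contraNneq mnot => ->; rewrite inE eqxx.
  have ynz : y != z by apply: contraNneq ynot => ->; exact: zin.
  have hy := mmax _ ymem; have hz := mmax _ zmem.
  have ylt : (val y < val m)%N.
    rewrite ltn_neqAle hy andbT; apply/eqP => h.
    by move: mny; rewrite -(inj_eq val_inj) h eqxx.
  have zlt : (val z < val m)%N.
    move: ezm => /andP[zm _].
    rewrite ltn_neqAle hz andbT; apply/eqP => h.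
    by move: zm; rewrite -(inj_eq val_inj) h eqxx.
  have pm : forall u : 'I_k, (val u < val m)%N -> e m u -> par m = u.
    move=> u ul /andP[_ /orP[/andP[_ /eqP]//|/andP[u0 /eqP pu]]].
    have hu : (par u < u)%N by apply: hpar; rewrite u0 ltn_ord.
    by move: (ltn_trans hu ul); rewrite pu ltnn.
  have h1 := pm y ylt emy.
  have h2 := pm z zlt ltac:(by rewrite esym).
  by move: ynz; rewrite -(inj_eq val_inj) /= -h1 -h2 eqxx.
Qed.


Lemma decomp_tw (G : rel 'I_n) (w W : R) :
  Decomp G setT w -> w - 1 <= W -> treewidth_le G W.
Proof.
move=> [k [par [bag [k0 hpar hsub hcov [hedge htop hw]]]]] hW.
exists k; exists (fun a b : 'I_k => (a != b) &&
      (((0 < a)%N && (par a == b)) || ((0 < b)%N && (par b == a)))).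
exists (fun i : 'I_k => bag (val i)).
split; last first.
  by move=> i; apply: (le_trans _ hW); rewrite lerD2r; exact: hw (ltn_ord i).
split.
- exact: par_tree.
- move=> x; have [i ik xi] := hcov x (in_setT x).
  by exists (Ordinal ik).
- move=> x y gxy; have [i ik xyi] := hedge x y (in_setT x) (in_setT y) gxy.
  by exists (Ordinal ik).
- move=> x i j xi xj.
  set e := (fun a b : 'I_k => _).
  have exsym : symmetric e.
    move=> a b; rewrite /e [b == a]eq_sym.
    case: (a != b); case: (x \in bag a); case: (x \in bag b); rewrite /= ?andbF //.
    by rewrite orbC.
  have [top topk htop'] := htop x.
  have totop : forall a : 'I_k, x \in bag a -> connect e a (Ordinal topk).
    move=> a; have [m] := ubnP (val a); elim: m a => // m IH a.
    rewrite ltnS => am xa.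
    case: (htop' a (ltn_ord a) xa) => [atop|[a0 xpa]].
      by have -> : a = Ordinal topk by apply: val_inj.
    have hx : (par a < a)%N by apply: hpar; rewrite a0 ltn_ord.
    have plt : (par a < k)%N by apply: ltn_trans hx (ltn_ord a).
    apply: (connect_trans (y := Ordinal plt)).
      apply: connect1; rewrite /e /= a0 eqxx /= xa xpa !andbT.
      apply/eqP => /(congr1 val) /= h.
      by move: hx; rewrite -h ltnn.
    by apply: IH => //=; apply: leq_trans hx am.
  apply: (connect_trans (totop i xi)).
  by rewrite (sym_connect_sym exsym) totop.
Qed.

End Tree.



Section Rec.
Variable R : realType.
Variable n : nat.

Lemma cardsU_le (A B : {set 'I_n}) : (#|A :|: B| <= #|A| + #|B|)%N.
Proof. by rewrite cardsU leq_subr. Qed.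

Lemma decomp_rec (G : rel 'I_n) (Gsym : symmetric G) (W : nat -> R)
  (W0 : 0 <= W 0%N)
  (hsep : forall V : {set 'I_n}, V != set0 -> exists S A B : {set 'I_n},
     [/\ S \subset V, A :|: B = V :\: S, [disjoint A & B],
        (forall x y, x \in A -> y \in B -> ~~ G x y) &
        [/\ (#|A| < #|V|)%N, (#|B| < #|V|)%N, #|S|%:R + W #|A| <= W #|V|
          & #|S|%:R + W #|B| <= W #|V|]]) :
  forall V, Decomp G V (W #|V|).
Proof.
move=> V; have [m] := ubnP #|V|; elim: m V => // m IH V.
rewrite ltnS => Vm.
case: (altP (V =P set0)) => [->|V0].
  exists 1%N, id, (fun _ => set0); rewrite cards0; split => //.
  - by case=> [|[]].
  - by move=> x; rewrite inE.
  split => //.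
  - by move=> x y; rewrite inE.
  - by move=> x; exists 0%N => // i _; rewrite inE.
have [S [A [B [SV hAB dAB noG [ltA ltB wA wB]]]]] := hsep V V0.
have [kA [pA [bA [kA0 hpA hsA hcA [heA htA hwA]]]]] := IH A (leq_trans ltA Vm).
have [kB [pB [bB [kB0 hpB hsB hcB [heB htB hwB]]]]] := IH B (leq_trans ltB Vm).
have AV : A \subset V.
  apply/subsetP => x xA; have : x \in A :|: B by rewrite inE xA.
  by rewrite hAB inE => /andP[].
have BV : B \subset V.
  apply/subsetP => x xB; have : x \in A :|: B by rewrite inE xB orbT.
  by rewrite hAB inE => /andP[].
have AS : forall x, x \in A -> x \notin S.
  move=> x xA; have : x \in A :|: B by rewrite inE xA.
  by rewrite hAB inE => /andP[].
have BS : forall x, x \in B -> x \notin S.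
  move=> x xB; have : x \in A :|: B by rewrite inE xB orbT.
  by rewrite hAB inE => /andP[].
have SbA : forall i x, x \in bA i -> (i < kA)%N -> x \in A.
  by move=> i x xi ik; apply: (subsetP (hsA i ik)).
have SbB : forall i x, x \in bB i -> (i < kB)%N -> x \in B.
  by move=> i x xi ik; apply: (subsetP (hsB i ik)).
pose bag := fun i : nat => S :|: (if (i < kA)%N then bA i else bB (i - kA)%N).
pose par := fun i : nat => if (i < kA)%N then pA i else if i == kA then 0%N else (kA + pB (i - kA)%N)%N.
have bagA : forall i, (i < kA)%N -> bag i = S :|: bA i.
  by move=> i ik; rewrite /bag ik.
have bagB : forall j, bag (kA + j)%N = S :|: bB j.
  by move=> j; rewrite /bag ltnNge leq_addr /= addKn.
have k0 : (0 < kA + kB)%N by rewrite addn_gt0 kA0.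
have hcov : forall x, x \in V -> exists2 i, (i < kA + kB)%N & x \in bag i.
  move=> x xV.
  case: (boolP (x \in S)) => xS.
    by exists 0%N; rewrite // inE xS.
  have : x \in A :|: B by rewrite hAB inE xS xV.
  rewrite inE => /orP[xA|xB].
    have [i ik xi] := hcA x xA.
    by exists i; [clear -ik; lia | rewrite bagA // inE xi orbT].
  have [i ik xi] := hcB x xB.
  exists (kA + i)%N; first by clear -ik; lia.
  by rewrite bagB inE xi orbT.
have bag_mem : forall i x, (i < kA + kB)%N -> x \in bag i ->
    [\/ x \in S, [/\ (i < kA)%N, x \in bA i & x \in A]
      | [/\ (kA <= i)%N, x \in bB (i - kA)%N & x \in B]].
  move=> i x ik; rewrite /bag inE => /orP[xS|]; first by constructor 1.
  case: (ltnP i kA) => iA xi.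
    by constructor 2; split => //; apply: SbA xi iA.
  constructor 3; split => //; apply: SbB xi _; clear -ik iA; lia.
exists (kA + kB)%N, par, bag.
split => //.
- move=> i /andP[i0 ik]; rewrite /par.
  case: (ltnP i kA) => iA.
    by apply: hpA; rewrite i0 iA.
  case: (altP (i =P kA)) => [->//|ikA].
  have j0 : (0 < i - kA < kB)%N by clear -iA ikA ik; apply/andP; split; lia.
  by have := hpB _ j0; clear -iA ikA; lia.
- move=> i ik; rewrite subUset SV /=.
  case: (ltnP i kA) => iA.
    by apply: subset_trans AV; apply: hsA.
  by apply: subset_trans BV; apply: hsB; clear -iA ik; lia.
split.
- move=> x y xV yV gxy.
  case: (boolP (x \in S)) => xS.
    have [i ik yi] := hcov y yV.
    by exists i => //; rewrite yi andbT /bag inE xS.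
  case: (boolP (y \in S)) => yS.
    have [i ik xi] := hcov x xV.
    by exists i => //; rewrite xi /= /bag inE yS.
  have : x \in A :|: B by rewrite hAB inE xS xV.
  have : y \in A :|: B by rewrite hAB inE yS yV.
  rewrite !inE => /orP[yA|yB] /orP[xA|xB].
  + have [i ik xyi] := heA x y xA yA gxy.
    exists i; first by clear -ik; lia.
    by rewrite bagA // !inE; case/andP: xyi => -> ->; rewrite !orbT.
  + by move: (noG y x yA xB); rewrite Gsym gxy.
  + by move: (noG x y xA yB); rewrite gxy.
  + have [i ik xyi] := heB x y xB yB gxy.
    exists (kA + i)%N; first by clear -ik; lia.
    by rewrite bagB !inE; case/andP: xyi => -> ->; rewrite !orbT.
- move=> x.
  case: (boolP (x \in S)) => xS.
    exists 0%N => // i ik _.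
    case: (posnP i) => i0; [by left | right; split => //].
    by rewrite /bag inE xS.
  case: (boolP (x \in A)) => xA.
    have [t tk ht] := htA x.
    exists t; first by clear -tk; lia.
    move=> i ik /(bag_mem _ _ ik) [xS'|[iA xi _]|[_ _ xB]].
    + by rewrite xS' in xS.
    + case: (ht i iA xi) => [->|[i0 xp]]; [by left | right; split => //].
      have pk : (pA i < kA)%N.
        have h : (pA i < i)%N by apply: hpA; rewrite i0 iA.
        exact: (ltn_trans h iA).
      by rewrite /par iA bagA // inE xp orbT.
    + by move: (disjointFr dAB xA); rewrite xB.
  case: (boolP (x \in B)) => xB.
    have [t tk ht] := htB x.
    exists (kA + t)%N; first by clear -tk; lia.
    move=> i ik /(bag_mem _ _ ik) [xS'|[_ _ xA']|[iA xi _]].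
    + by rewrite xS' in xS.
    + by rewrite xA' in xA.
    + have jk : (i - kA < kB)%N by clear -ik iA; lia.
      case: (ht _ jk xi) => [ht'|[j0 xp]].
        by left; clear -ht' iA; lia.
      right; split; first by clear -j0; lia.
      have -> : par i = (kA + pB (i - kA))%N.
        rewrite /par ltnNge iA /=.
        by have -> : (i == kA) = false by apply/negbTE; clear -j0; lia.
      by rewrite bagB inE xp orbT.
  exists 0%N => // i ik /(bag_mem _ _ ik) [xS'|[_ _ xA']|[_ _ xB']].
  + by rewrite xS' in xS.
  + by rewrite xA' in xA.
  + by rewrite xB' in xB.
- move=> i ik; rewrite /bag.
  apply: (le_trans (y := (#|S| + #|if (i < kA)%N then bA i else bB (i - kA)%N|)%:R)).
    by rewrite ler_nat cardsU_le.
  rewrite natrD.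
  case: (ltnP i kA) => iA.
    by apply: le_trans wA; rewrite lerD2l; apply: hwA.
  by apply: le_trans wB; rewrite lerD2l; apply: hwB; clear -ik iA; lia.
Qed.
End Rec.



Section Greedy2.
Variable R : realType.
Variables (d n : nat) (p : 'I_n -> 'rV[R]_d).

Lemma edistC (x y : 'rV[R]_d) : edist x y = edist y x.
Proof.
rewrite /edist; congr Num.sqrt; apply: eq_bigr => i _.
by rewrite -opprB sqrrN.
Qed.

Lemma edist_ge0 (x y : 'rV[R]_d) : 0 <= edist x y.
Proof. exact: sqrtr_ge0. Qed.

Definition step (t : R) (E : seq ('I_n * 'I_n)) (uv : 'I_n * 'I_n) :=
  if `[< has_path_within p E uv.1 uv.2 (t * edist (p uv.1) (p uv.2)) >]
  then E else rcons E uv.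

Lemma greedy_foldl t s : greedy_spanner p t s = foldl (step t) [::] s.
Proof. by []. Qed.

Lemma sub_fold t s E x : x \in E -> x \in foldl (step t) E s.
Proof.
elim: s E => //= a s IH E xE; apply: IH.
by rewrite /step; case: ifP => // _; rewrite mem_rcons inE xE orbT.
Qed.

Lemma fold_mem t s E x : x \in foldl (step t) E s -> (x \in E) || (x \in s).
Proof.
elim: s E => [|a s IH] E /=; first by rewrite orbF.
move=> /IH /orP[h|h]; last by rewrite inE h !orbT.
move: h; rewrite /step; case: ifP => _; first by move->.
rewrite mem_rcons inE => /orP[/eqP->|->//].
by rewrite inE eqxx orbT.
Qed.

Lemma hp_mono E E' a b L : (forall x, x \in E -> x \in E') ->
  has_path_within p E a b L -> has_path_within p E' a b L.
Proof.
move=> sub [w [pw lw len]]; exists w; split => //.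
apply: sub_path pw => x y; rewrite /adj => /orP[/sub->//|/sub->]; by rewrite orbT.
Qed.

Lemma hp_le E a b L L' : L <= L' ->
  has_path_within p E a b L -> has_path_within p E a b L'.
Proof.
move=> LL [w [pw lw len]]; exists w; split => //; exact: le_trans len LL.
Qed.

Lemma walk_length_cons u x w :
  walk_length p u (x :: w) = edist (p u) (p x) + walk_length p x w.
Proof. by rewrite /walk_length /= big_cons. Qed.

Lemma walk_length_cat u w1 w2 :
  walk_length p u (w1 ++ w2) = walk_length p u w1 + walk_length p (last u w1) w2.
Proof. by rewrite /walk_length pairmap_cat big_cat. Qed.

Lemma hp_cat E a b c L1 L2 :
  has_path_within p E a b L1 -> has_path_within p E b c L2 ->
  has_path_within p E a c (L1 + L2).
Proof.
move=> [w1 [pw1 lw1 len1]] [w2 [pw2 lw2 len2]].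
exists (w1 ++ w2); split.
- by rewrite cat_path pw1 lw1 pw2.
- by rewrite last_cat lw1.
- by rewrite walk_length_cat lw1 lerD.
Qed.

Lemma adjC (E : seq ('I_n * 'I_n)) x y : adj E x y = adj E y x.
Proof. by rewrite /adj orbC. Qed.

Lemma hp_rev E a b L : has_path_within p E a b L -> has_path_within p E b a L.
Proof.
move=> [w [pw lw len]]; apply: (hp_le len); rewrite -{}lw; clear len.
elim: w a pw => [|x w IH] a /=.
  move=> _; exists [::]; split => //; by rewrite /walk_length big_nil.
move=> /andP[ax pw]; rewrite walk_length_cons addrC.
apply: hp_cat (IH _ pw) _.
exists [:: a]; split => //=.
- by rewrite adjC ax.
- by rewrite walk_length_cons /walk_length big_nil addr0 edistC.
Qed.

Lemma fold_paths t (t1 : 1 <= t) s E a : a \in s ->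
  has_path_within p (foldl (step t) E s) a.1 a.2 (t * edist (p a.1) (p a.2)).
Proof.
elim: s E => // b s IH E; rewrite inE => /orP[/eqP->|ain]; last exact: IH.
apply: (hp_mono (E := step t E b)); first by move=> x; apply: sub_fold.
rewrite /step; case: ifP => [/asboolP //|_].
exists [:: b.2]; split => //=.
- by rewrite /adj mem_rcons inE -surjective_pairing eqxx.
- rewrite walk_length_cons /walk_length big_nil addr0.
  by rewrite ler_peMl // edist_ge0.
Qed.

Lemma all_pairs_mem a b : ((a, b) \in all_pairs n) = (a < b)%N.
Proof.
rewrite /all_pairs mem_filter /=; case: ltnP => //= _.
by apply: (allpairs_f (fun i j => (i, j))); rewrite mem_enum.
Qed.

Lemma all_pairs_uniq : uniq (all_pairs n).
Proof.
rewrite /all_pairs filter_uniq // allpairs_uniq ?enum_uniq //.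
by move=> [a b] [a' b'] _ _ /= [-> ->].
Qed.

Lemma no_detour t (t1 : 1 <= t) s (hs : greedy_order p s) u v z :
  (u, v) \in greedy_spanner p t s -> z != u -> z != v ->
  edist (p u) (p z) < edist (p u) (p v) ->
  edist (p z) (p v) < edist (p u) (p v) ->
  edist (p u) (p z) + edist (p z) (p v) <= edist (p u) (p v) -> False.
Proof.
case: hs => hperm hsort uvE zu zv d1 d2 d3.
have us : uniq s by rewrite (perm_uniq hperm) all_pairs_uniq.
have uvs : (u, v) \in s.
  by move: uvE; rewrite greedy_foldl => /fold_mem.
case/splitPr: uvs hperm hsort us uvE => s1 s2 hperm hsort us uvE.
set E1 := foldl (step t) [::] s1.
move: us; rewrite cat_uniq /= => /and3P[_ /norP[uvs1 _] /andP[uvs2 _]].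
have keyP : forall P, P \in s1 ++ (u, v) :: s2 ->
    edist (p P.1) (p P.2) < edist (p u) (p v) -> P \in s1.
  move=> P; rewrite mem_cat inE => /orP[//|/orP[/eqP-> /=|Ps2]].
    by rewrite ltxx.
  have := cat_sorted2 hsort => -[_ /= hs2].
  have tr : transitive (fun a b : 'I_n * 'I_n =>
      edist (p a.1) (p a.2) <= edist (p b.1) (p b.2)).
    by move=> x y w; apply: le_trans.
  have /= h := allP (order_path_min tr hs2) P Ps2.
  by move=> lt; move: (le_lt_trans h lt); rewrite ltxx.
have hpE1 : forall a b, a != b -> edist (p a) (p b) < edist (p u) (p v) ->
    has_path_within p E1 a b (t * edist (p a) (p b)).
  move=> a b ab dab.
  case: (ltngtP (val a) (val b)) => hab.
  - have Ps : (a, b) \in s1.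
      apply: keyP => //; by rewrite (perm_mem hperm) all_pairs_mem.
    exact: (fold_paths t1 [::] Ps).
  - have Ps : (b, a) \in s1.
      apply: keyP; last by rewrite /= edistC.
      by rewrite (perm_mem hperm) all_pairs_mem.
    rewrite edistC; apply: hp_rev; exact: (fold_paths t1 [::] Ps).
  - by move: ab; rewrite (val_inj hab) eqxx.
have huz := hpE1 u z ltac:(by rewrite eq_sym) d1.
have hzv := hpE1 z v zv d2.
have huv : has_path_within p E1 u v (t * edist (p u) (p v)).
  apply: (hp_le _ (hp_cat huz hzv)).
  rewrite -mulrDr ler_wpM2l //; lra.
move: uvE; rewrite greedy_foldl foldl_cat /= => /fold_mem.
rewrite (negbTE uvs2) orbF /step -/E1 (asboolT huv).
move=> /(fold_mem) /=; by rewrite (negbTE uvs1).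
Qed.

End Greedy2.



Section Ext.
Variable R : realType.
Variable n : nat.

Lemma decomp_extend (G : rel 'I_n) (Gsym : symmetric G) (V : {set 'I_n}) m
    (w : R) (N : {set 'I_n}) :
  m \in V -> N \subset V -> m \in N -> #|N|%:R <= w ->
  (forall x y, x \in N :\ m -> y \in N :\ m -> x = y) ->
  (forall y, y \in V -> G m y -> y \in N) ->
  Decomp G (V :\ m) w -> Decomp G V w.
Proof.
move=> mV NV mN Nw N1 hG [k [par [bag [k0 hpar hsub hcov [hedge htop hw]]]]].
have [i0 i0k Ni0] : exists2 i0, (i0 < k)%N & N :\ m \subset bag i0.
  case: (set_0Vmem (N :\ m)) => [->|[x xN]].
    by exists 0%N => //; rewrite sub0set.
  have xV : x \in V :\ m.
    by move: xN; rewrite !inE => /andP[-> /(subsetP NV) ->].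
  have [i ik xi] := hcov x xV.
  exists i => //; apply/subsetP => y yN.
  by rewrite (N1 _ _ yN xN).
have bagsub : forall i, (i < k)%N -> m \notin bag i.
  by move=> i ik; apply/negP => /(subsetP (hsub i ik)); rewrite !inE eqxx.
exists k.+1, (fun i => if i == k then i0 else par i),
  (fun i => if i == k then N else bag i).
split => //.
- move=> i /andP[i0' ik]; case: eqP => [->//|/eqP ink].
  by apply: hpar; rewrite i0'; clear -ik ink; lia.
- move=> i ik; case: eqP => // /eqP ink.
  apply: subset_trans (hsub i _) _; first by clear -ik ink; lia.
  by apply/subsetP => x; rewrite inE => /andP[].
- move=> x xV; case: (altP (x =P m)) => [->|xm].
    by exists k => //; rewrite eqxx.
  have [i ik xi] := hcov x ltac:(by rewrite !inE xm xV).
  by exists i; [clear -ik; lia | rewrite (ltn_eqF ik)].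
split.
- move=> x y xV yV gxy.
  case: (altP (x =P m)) => [xm|xm].
    exists k => //; rewrite eqxx xm mN /=; apply: hG => //; by rewrite -xm.
  case: (altP (y =P m)) => [ym|ym].
    exists k => //; rewrite eqxx ym mN andbT; apply: hG => //; by rewrite Gsym -ym.
  have [i ik xyi] := hedge x y ltac:(by rewrite !inE xm xV) ltac:(by rewrite !inE ym yV) gxy.
  by exists i; [clear -ik; lia | rewrite (ltn_eqF ik)].
- move=> x; case: (altP (x =P m)) => [->|xm].
    exists k => // i ik; case: eqP => [->//|/eqP ink]; first by left.
    by rewrite (negbTE (bagsub i _)) //; clear -ik ink; lia.
  have [t tk ht] := htop x.
  exists t; first by clear -tk; lia.
  move=> i ik; case: eqP => [->|/eqP ink] xi.
    right; split => //; rewrite (ltn_eqF i0k).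
    by apply: (subsetP Ni0); rewrite !inE xm.
  have ik' : (i < k)%N by clear -ik ink; lia.
  case: (ht i ik' xi) => [->|[i0' xp]]; [by left | right; split => //].
  have pk : (par i < k)%N.
    have h : (par i < i)%N by apply: hpar; rewrite i0' ik'.
    exact: (ltn_trans h ik').
  by rewrite (ltn_eqF pk).
- move=> i ik; case: eqP => // /eqP ink; apply: hw; clear -ik ink; lia.
Qed.

Lemma set_max_ex (f : 'I_n -> R) (V : {set 'I_n}) : V != set0 ->
  exists2 m, m \in V & forall y, y \in V -> f y <= f m.
Proof.
move=> V0.
suff : forall c : seq 'I_n, c != [::] ->
    exists2 m, m \in c & forall y, y \in c -> f y <= f m.
  case/(_ (enum V)) => [|m]; last by rewrite mem_enum => mV h; exists m => // y yV; apply: h; rewrite mem_enum.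
  case: (set_0Vmem V) V0 => [->|[x xV] _]; first by rewrite eqxx.
  by apply/eqP => h; move: xV; rewrite -mem_enum h.
elim=> // a c IH _.
case: (altP (c =P [::])) => [->|cne].
  by exists a; rewrite ?inE // => y; rewrite inE => /eqP->.
have [m mc mmax] := IH cne.
case: (lerP (f a) (f m)) => h.
  exists m; first by rewrite inE mc orbT.
  by move=> y; rewrite inE => /orP[/eqP->//|/mmax].
exists a; first by rewrite inE eqxx.
move=> y; rewrite inE => /orP[/eqP->//|/mmax h']; exact: le_trans h' (ltW h).
Qed.

End Ext.



Section Line.
Variable R : realType.
Variables (n : nat) (p : 'I_n -> 'rV[R]_1) (s : seq ('I_n * 'I_n)).
Hypothesis hs : greedy_order p s.
Hypothesis pinj : injective p.

Let c (i : 'I_n) := p i ord0 ord0.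

Lemma edist1 a b : edist (p a) (p b) = `|c a - c b|.
Proof. by rewrite /edist big_ord1 sqrtr_sqr. Qed.

Lemma c_inj : injective c.
Proof.
move=> a b h; apply: pinj; apply/rowP => j; rewrite (ord1 j); exact: h.
Qed.

Lemma no_between x y z :
  adj (greedy_spanner p (3 / 2) s) x y -> c x < c z -> c z < c y -> False.
Proof.
move=> hxy h1 h2.
have t1 : 1 <= 3 / 2 :> R by lra.
have zx : z != x by apply/eqP => e; move: h1; rewrite e ltxx.
have zy : z != y by apply/eqP => e; move: h2; rewrite e ltxx.
have nl : forall a b : R, a < b -> `|a - b| = b - a.
  by move=> a b ab; rewrite ler0_norm ?opprB //; lra.
have nr : forall a b : R, a < b -> `|b - a| = b - a.
  by move=> a b ab; rewrite ger0_norm //; lra.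
have h3 : c x < c y by lra.
case/orP: hxy => hE.
- apply: (no_detour t1 hs hE zx zy); rewrite !edist1 ?(nl _ _ h1) ?(nl _ _ h2) ?(nl _ _ h3); lra.
- apply: (no_detour t1 hs hE zy zx); rewrite !edist1 ?(nr _ _ h1) ?(nr _ _ h2) ?(nr _ _ h3); lra.
Qed.

Lemma decomp_line : forall V, Decomp (adj (greedy_spanner p (3 / 2) s)) V (2 : R).
Proof.
set G := adj _.
have Gsym : symmetric G by move=> a b; rewrite /G /adj orbC.
move=> V; have [m] := ubnP #|V|; elim: m V => // m IH V.
rewrite ltnS => Vm.
case: (altP (V =P set0)) => [->|V0].
  exists 1%N, id, (fun _ => set0); split => //.
  - by case=> [|[]].
  - by move=> x; rewrite inE.
  split => //.
  - by move=> x y; rewrite inE.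
  - by move=> x; exists 0%N => // i _; rewrite inE.
  - by move=> i _; rewrite cards0 ler0n.
have [mx mxV mxmax] := set_max_ex c V0.
have hV' : (#|V :\ mx| < m)%N.
  by move: Vm; rewrite (cardsD1 mx V) mxV add1n.
have IHV := IH _ hV'.
case: (altP ((V :\ mx) =P set0)) => [V'0|V'0].
  apply: (decomp_extend Gsym mxV (N := [set mx]) _ _ _ _ _ IHV).
  - by rewrite sub1set.
  - by rewrite inE.
  - by rewrite cards1; lra.
  - by move=> x y; rewrite !inE => /andP[/negbTE-> ].
  - move=> y yV _; rewrite inE; apply/contraT => ym.
    have : y \in V :\ mx by rewrite !inE ym yV.
    by rewrite V'0 inE.
have [mx' mx'V mx'max] := set_max_ex c V'0.
have mx'V0 : mx' \in V by move: mx'V; rewrite !inE => /andP[].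
have mx'ne : mx' != mx by move: mx'V; rewrite !inE => /andP[].
apply: (decomp_extend Gsym mxV (N := [set mx; mx']) _ _ _ _ _ IHV).
- by apply/subsetP => x; rewrite !inE => /orP[/eqP->|/eqP->].
- by rewrite !inE eqxx.
- rewrite cards2; case: (_ != _); rewrite /=; lra.
- move=> x y; rewrite !inE => /andP[xm xo] /andP[ym yo].
  have -> : x = mx' by move: xo; rewrite (negbTE xm) /= => /eqP.
  by move: yo; rewrite (negbTE ym) /= => /eqP.
- move=> y yV gy; rewrite !inE; apply/contraT; rewrite negb_or => /andP[ym ym'].
  have yV' : y \in V :\ mx by rewrite !inE ym yV.
  have l1 : c y < c mx'.
    rewrite lt_neqAle mx'max // andbT; apply/eqP => /c_inj e.
    by rewrite e eqxx in ym'.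
  have l2 : c mx' < c mx.
    rewrite lt_neqAle mxmax // andbT; apply/eqP => /c_inj e.
    by rewrite e eqxx in mx'ne.
  have gym : G y mx by rewrite Gsym.
  by case: (no_between gym l1 l2).
Qed.
End Line.



Lemma all_pairs1 : all_pairs 1 = [::].
Proof.
case E: (all_pairs 1) => [//|[a b] l].
have : (a, b) \in all_pairs 1 by rewrite E inE eqxx.
by rewrite all_pairs_mem (ord1 a) (ord1 b).
Qed.

Unset Implicit Arguments.
Theorem lemma7 (R : realType) (d n : nat) (p : 'I_n -> 'rV[R]_d)
  (eta c : R) (s : seq ('I_n * 'I_n)) :
  (0 < d)%N ->
  injective p ->
  is_packing_constant d eta ->
  le_than_constant d eta c ->
  greedy_order p s ->
  treewidth_le (adj (greedy_spanner p (3 / 2) s))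
    (15 * eta * c * 8 ^+ d * powR n%:R (1 - d%:R^-1)).
Proof.
move=> d0 pinj [hpack _] hLT hs.
have eta1 : 1 <= eta.
  have := hpack 1 ltr01 (lexx 1) 1%N (fun _ => 0).
  rewrite expr1n invr1 mulr1; apply.
  - move=> i; rewrite /edist big1 ?sqrtr0 // => j _.
    by rewrite subrr expr0n.
  - by move=> i j; rewrite (ord1 i) (ord1 j) eqxx.
set c' := c * powR (3 / 2 - 1) (1 - 2 * d%:R).
set x := (eta * 2 ^+ d.+1)^-1.
set alpha := 1 - x.
have e2 : 4 <= 2 ^+ d.+1 :> R.
  rewrite (_ : d.+1 = (d.-1 + 2)%N); last by clear -d0; lia.
  rewrite exprD (_ : 2 ^+ 2 = 4 :> R); last by rewrite expr2; lra.
  by rewrite ler_peMl // exprn_ege1 // ler1n.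
have xpos : 0 < x by rewrite invr_gt0 mulr_gt0 //; lra.
have xle : x <= 4^-1.
  rewrite lef_pV2 ?posrE; [| nra | lra]; nra.
have alt1 : alpha < 1 by rewrite /alpha; lra.
have t32 : 1 < 3 / 2 :> R by lra.
have t32' : 3 / 2 <= 3 / 2 :> R by [].
have c'1 : 1 <= c'.
  have q1 : injective (fun _ : 'I_1 => (0 : 'rV[R]_d)).
    by move=> i j _; rewrite (ord1 i) (ord1 j).
  have go1 : greedy_order (fun _ : 'I_1 => (0 : 'rV[R]_d)) [::].
    by split => //; rewrite all_pairs1.
  have [S [[SV [A [B [hAB dAB _ wA wB]]]] hS]] :=
    hLT 1%N _ q1 (3 / 2) t32 t32' [::] go1 setT (fun _ _ => false) (fun _ _ h => False_ind _ (notF h)).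
  move: hS; rewrite cardsT card_ord powR1 mulr1 => hS.
  apply: le_trans hS.
  have : (0 < #|S|)%N.
    rewrite card_gt0; apply/eqP => S0.
    have : ord0 \in A :|: B by rewrite hAB S0 setD0 inE.
    rewrite inE => /orP[xA|xB].
      have : (0 < #|A|)%N by rewrite card_gt0; apply/set0Pn; exists ord0.
      move: wA; rewrite cardsT card_ord mulr1 -/x -/alpha => wA.
      move=> h; have h1 : 1%:R <= #|A|%:R :> R by rewrite ler_nat.
      lra.
    have : (0 < #|B|)%N by rewrite card_gt0; apply/set0Pn; exists ord0.
    move: wB; rewrite cardsT card_ord mulr1 -/x -/alpha => wB.
    move=> h; have h1 : 1%:R <= #|B|%:R :> R by rewrite ler_nat.
    lra.
  by rewrite -(ler_nat R).
set G := adj (greedy_spanner p (3 / 2) s).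
have Gsym : symmetric G by move=> a b; rewrite /G /adj orbC.
case: (altP (d =P 1%N)) => [d1|d1].
  subst d.
  apply: (decomp_tw (decomp_line hs pinj setT)).
  rewrite invr1 subrr powRr0 mulr1 expr1.
  move: c'1; rewrite /c'.
  rewrite (_ : 1 - 2 * 1%:R = -1 :> R); last by rewrite mulr1; lra.
  rewrite powR_inv1; last by lra.
  rewrite (_ : (3 / 2 - 1 : R)^-1 = 2); last first.
    rewrite (_ : 3 / 2 - 1 = (2 : R)^-1) ?invrK //.
    by field.
  move=> h; nra.
have d2 : (1 < d)%N by rewrite ltn_neqAle eq_sym d1 d0.
set beta := 1 - d%:R^-1.
have beta_h : 2^-1 <= beta.
  have h2 : 2 <= d%:R :> R by rewrite (ler_nat R 2 d).
  have : d%:R^-1 <= 2^-1 :> R by rewrite lef_pV2 ?posrE //; lra.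
  rewrite /beta; lra.
have beta0 : 0 <= beta by lra.
have alpha0 : 0 < alpha by rewrite /alpha; lra.
set Pa := powR alpha beta.
have Pa_le : Pa <= 1 - x / 2.
  apply: (le_trans (y := powR alpha 2^-1)).
    by apply: ger_powR => //; rewrite alpha0 ltW.
  rewrite powR12_sqrt ?(ltW alpha0) //.
  have h0 : 0 <= 1 - x / 2 by lra.
  rewrite -(ger0_norm h0) -sqrtr_sqr ler_sqrt; last by nra.
  rewrite /alpha; nra.
have den0 : 0 < 1 - Pa by lra.
set K := c' / (1 - Pa).
have K0 : 0 <= K by rewrite divr_ge0 //; lra.
have KP : K * (1 - Pa) = c' by rewrite /K divfK // (gt_eqF den0).
have Kid : c' + K * Pa = K by rewrite -KP; ring.
set Q : R := 2 ^+ d.+1.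
set E8 : R := 8 ^+ d.
have Qpos : 0 < Q by rewrite /Q; lra.
have hPq : powR (3 / 2 - 1) (1 - 2 * d%:R) * Q = E8.
  rewrite (_ : 3 / 2 - 1 = (2 : R)^-1); last by field.
  set h : R := 2^-1.
  have hh : powR h (1 - 2 * d%:R) * h ^+ (2 * d) = h.
    rewrite -powR_mulrn; last by rewrite /h; lra.
    rewrite -powRD; last by apply/implyP => _; rewrite /h; apply/eqP; lra.
    rewrite natrM (_ : 1 - 2%:R * d%:R + 2%:R * d%:R = 1); last by ring.
    by rewrite powRr1 // /h; lra.
  have h2 : h ^+ (2 * d) * 2 ^+ (2 * d) = 1.
    by rewrite -exprMn /h mulVf ?expr1n //; lra.
  have -> : powR h (1 - 2 * d%:R) = h * 2 ^+ (2 * d).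
    by move: (congr1 (fun z => z * 2 ^+ (2 * d)) hh) => /=; rewrite -mulrA h2 mulr1.
  rewrite /Q /E8 (_ : 8 = 2 ^+ 3 :> R); last by rewrite !exprS expr0; lra.
  rewrite -exprM exprS (_ : (3 * d)%N = (2 * d + d)%N); last by rewrite -{3}(mul1n d) -mulnDl.
  by rewrite exprD /h; field.
have cE8 : 0 <= c * E8.
  rewrite -hPq mulrA; apply: mulr_ge0; last exact: ltW Qpos.
  rewrite -/c'; lra.
have Kle : K <= 15 * eta * c * E8.
  rewrite /K ler_pdivrMr //.
  have hc' : c' = c * E8 / Q by rewrite -hPq /c' mulrA mulfK // gt_eqF.
  have hx : 15 * eta * c * E8 * x = 15 * (c * E8 / Q).
    by rewrite /x /Q; field; apply/andP; split; rewrite gt_eqF //; lra.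
  have y0 : 0 <= c * E8 / Q by rewrite divr_ge0 // ltW.
  have B0 : 0 <= 15 * eta * c * E8 by rewrite -!mulrA mulr_ge0 // mulr_ge0 //; lra.
  apply: (le_trans (y := 15 * eta * c * E8 * (x / 2))); last first.
    by apply: ler_wpM2l => //; lra.
  rewrite hc' mulrA hx; lra.
pose W := fun m : nat => K * powR m%:R beta.
have W0 : 0 <= W 0%N by rewrite /W mulr_ge0 // powR_ge0.
have hsep : forall V : {set 'I_n}, V != set0 -> exists S A B : {set 'I_n},
     [/\ S \subset V, A :|: B = V :\: S, [disjoint A & B],
        (forall x y, x \in A -> y \in B -> ~~ G x y) &
        [/\ (#|A| < #|V|)%N, (#|B| < #|V|)%N, #|S|%:R + W #|A| <= W #|V|
          & #|S|%:R + W #|B| <= W #|V|]].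
  move=> V V0.
  have Fh : forall a b, [&& G a b, a \in V & b \in V] ->
      [/\ adj (greedy_spanner p (3 / 2) s) a b, a \in V & b \in V].
    by move=> a b /and3P[].
  have [S [[SV [A [B [hAB dAB noF wA wB]]]] hS]] :=
    hLT n p pinj (3 / 2) t32 t32' s hs V _ Fh.
  rewrite -/x -/alpha in wA wB; rewrite -/c' -/beta in hS.
  have inV : forall a, a \in A :|: B -> a \in V.
    by move=> a; rewrite hAB inE => /andP[].
  have Vpos : 0 < #|V|%:R :> R by rewrite ltr0n card_gt0.
  have ltV : forall Z : {set 'I_n}, #|Z|%:R <= alpha * #|V|%:R -> (#|Z| < #|V|)%N.
    by move=> Z hZ; rewrite -(ltr_nat R); nra.
  have WV : forall Z : {set 'I_n}, #|Z|%:R <= alpha * #|V|%:R ->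
      #|S|%:R + W #|Z| <= W #|V|.
    move=> Z hZ; rewrite /W.
    have hA' : powR #|Z|%:R beta <= Pa * powR #|V|%:R beta.
      rewrite /Pa -powRM; [|lra|by rewrite ler0n].
      by apply: ge0_ler_powR => //; rewrite nnegrE ?ler0n // mulr_ge0 ?ler0n //; lra.
    have -> : K * powR #|V|%:R beta = c' * powR #|V|%:R beta + K * (Pa * powR #|V|%:R beta).
      by rewrite -{1}Kid mulrDl mulrA.
    by apply: lerD => //; apply: ler_wpM2l.
  exists S, A, B; split => //.
    move=> a b aA bB; have := noF a b aA bB.
    by rewrite (inV a) ?(inV b) ?inE ?aA ?bB ?orbT // !andbT.
  by split; [apply: ltV | apply: ltV | apply: WV | apply: WV].
have D := decomp_rec Gsym W0 hsep setT.
apply: (decomp_tw D).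
rewrite cardsT card_ord /W -/beta -/E8.
have := ler_wpM2r (powR_ge0 n%:R beta) Kle; lra.
Qed.
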